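(* Let $\beta>1$ be a Yrrap number. For $w\in\mathcal{L}(\Sigma_{-\beta})$ let $g_\beta(w)$ be the minimal integer $i\ge0$ such that there exist $v\in\mathcal{L}_i(\Sigma_{-\beta})$ and integers $0\le c<d\le b$ with $wvc,wvd\in\mathcal{L}(\Sigma_{-\beta})$, and let $g_\beta(n)=\sup_{w\in\mathcal{L}_n(\Sigma_{-\beta})}g_\beta(w)$. If $\lim_{n\to\infty}g_\beta(n)/n=0$, then $$\liminf_{n\to\infty}\inf_{w\in\mathcal{L}_n(\Sigma_{-\beta})}\Big(\frac1n\log L_{-\beta}([w])+\log\beta\Big)\ge0.$$
   Context: $(-\beta)$-transformation: $b=\max\{k\in\mathbb{Z}:k<\beta\}$, $I_i=(i/\beta,(i+1)/\beta)$ ($0\le i\le b-1$), $I_b=(b/\beta,1)$, $T_{-\beta}(x)=-\beta x+(i+1)$ on $I_i$; for $x\notin\bigcup_{i\ge0}T_{-\beta}^{-i}\{0,1/\beta,\dots,b/\beta,1\}$, $(i'(x))_k=j$ iff $T_{-\beta}^k(x)\in I_j$; $i'(1)=\lim_{x\to1^-}i'(x)$. Case 1: $i'(1)=(w0)^\infty$ for some finite word $w$; then $T_{-\beta}(0)=1$, $T_{-\beta}(i/\beta)=0$ ($1\le i\le b$), $T_{-\beta}(1)=\lim_{x\to1^-}T_{-\beta}(x)$. Case 2: otherwise; $T_{-\beta}(0)=1$, $T_{-\beta}(i/\beta)=1$ ($1\le i\le b$), $T_{-\beta}(1)=\lim_{x\to1^-}T_{-\beta}(x)$. Yrrap: the $T_{-\beta}$-orbit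 of $1$ is eventually periodic. $\Sigma_{-\beta}$: closure in $\{0,\dots,b\}^{\mathbb{Z}_+}$ of the set of $i'(x)$ over non-preimages $x$ of partition points, with shift $\sigma$; $\mathcal{L}(\Sigma_{-\beta})$ its language, $\mathcal{L}_n$ words of length $n$, $[w]$ cylinder sets. $\Phi\colon[0,1]\to\Sigma_{-\beta}$: in Case 1 let $J_0=[0,1/\beta]$, $J_i=(i/\beta,(i+1)/\beta]$ ($1\le i\le b-1$), $J_b=(b/\beta,1]$; in Case 2 let $J_i=[i/\beta,(i+1)/\beta)$ ($0\le i\le b-1$), $J_b=[b/\beta,1]$; $(\Phi(x))_i=j$ iff $T_{-\beta}^i(x)\in J_j$. $L_{-\beta}=L\circ\Phi^{-1}$, $L$ Lebesgue measure. *)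

(* Defs.v *)
From Stdlib Require Import Reals Lra List ZArith Classical ClassicalEpsilon.
Import ListNotations.
Open Scope R_scope.

(* b = max { k in Z : k < beta }.  (up beta is the least integer > beta.) *)
Definition bZ (beta : R) : Z :=
  if Rlt_dec (IZR (up beta - 1)) beta then (up beta - 1)%Z else (up beta - 2)%Z.
Definition bnat (beta : R) : nat := Z.to_nat (bZ beta).

Definition part_pt (beta y : R) : Prop :=
  y = 0 \/ y = 1 \/ exists i : nat, (1 <= i <= bnat beta)%nat /\ y = INR i / beta.

(* T_{-beta} on the open intervals I_i : x |-> -beta x + (i+1), i = floor(beta x) *)
Definition Tgen (beta y : R) : R := - beta * y + (IZR (Int_part (beta * y)) + 1).

Definition nonpre (beta x : R) : Prop :=
  0 <= x <= 1 /\ forall n : nat, ~ part_pt beta (Nat.iter n (Tgen beta) x).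

(* (i'(x))_k = j iff T^k x in I_j, for non-preimages x *)
Definition idig (beta x : R) (k : nat) : nat :=
  Z.to_nat (Int_part (beta * Nat.iter k (Tgen beta) x)).

(* (i'(1))_k = j, where i'(1) = lim_{x -> 1^-} i'(x) (product topology) *)
Definition i1_digit (beta : R) (k j : nat) : Prop :=
  exists delta, 0 < delta /\
    forall x, 1 - delta < x < 1 -> nonpre beta x -> idig beta x k = j.

Definition periodic_w0 (w : list nat) (k : nat) : nat :=
  nth (k mod (length w + 1)) (w ++ [0%nat]) 0%nat.

Definition Case1 (beta : R) : Prop :=
  exists w : list nat, forall k, i1_digit beta k (periodic_w0 w k).

(* The full map T_{-beta} on [0,1], with the case-dependent values at
   partition points; T(1) = lim_{x->1^-} T(x) = -beta + (b+1). *)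
Definition Tm (beta y : R) : R :=
  if Req_EM_T y 0 then 1
  else if Req_EM_T y 1 then - beta * 1 + (INR (bnat beta) + 1)
  else if excluded_middle_informative (part_pt beta y) then
    (if excluded_middle_informative (Case1 beta) then 0 else 1)
  else Tgen beta y.

Definition Yrrap (beta : R) : Prop :=
  exists m p : nat, (0 < p)%nat /\
    Nat.iter (m + p) (Tm beta) 1 = Nat.iter m (Tm beta) 1.

Definition inJ (beta : R) (j : nat) (y : R) : Prop :=
  let b := bnat beta in
  (Case1 beta /\
    ((j = 0%nat /\ 0 <= y <= 1 / beta)
     \/ ((1 <= j)%nat /\ (j < b)%nat /\ INR j / beta < y <= (INR j + 1) / beta)
     \/ (j = b /\ INR b / beta < y <= 1)))
  \/ (~ Case1 beta /\
    (((j < b)%nat /\ INR j / beta <= y < (INR j + 1) / beta)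
     \/ (j = b /\ INR b / beta <= y <= 1))).

(* Sigma_{-beta}: closure of { i'(x) } in the product topology *)
Definition inSigma (beta : R) (y : nat -> nat) : Prop :=
  forall n : nat, exists x, nonpre beta x /\
    forall k, (k < n)%nat -> y k = idig beta x k.

Definition inL (beta : R) (w : list nat) : Prop :=
  exists y, inSigma beta y /\
    exists m : nat, forall k, (k < length w)%nat -> y (m + k)%nat = nth k w 0%nat.

Definition in_cyl (beta : R) (w : list nat) (y : nat -> nat) : Prop :=
  inSigma beta y /\ forall k, (k < length w)%nat -> y k = nth k w 0%nat.

Definition Phi_rel (beta x : R) (y : nat -> nat) : Prop :=
  forall i : nat, inJ beta (y i) (Nat.iter i (Tm beta) x).

Definition Phi_preim_cyl (beta : R) (w : list nat) (x : R) : Prop :=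
  0 <= x <= 1 /\ exists y, Phi_rel beta x y /\ in_cyl beta w y.

Definition cover_sum (A : R -> Prop) (s : R) : Prop :=
  exists a c : nat -> R, (forall n, a n <= c n) /\
    (forall x, A x -> exists n, a n < x < c n) /\
    infinite_sum (fun n => c n - a n) s.

Definition lebesgue_measure_is (A : R -> Prop) (m : R) : Prop :=
  (forall s, cover_sum A s -> m <= s) /\
  (forall eps, 0 < eps -> exists s, cover_sum A s /\ s < m + eps).

Definition gap_ok (beta : R) (w : list nat) (i : nat) : Prop :=
  exists v : list nat, length v = i /\ inL beta v /\
    exists c d : nat, (c < d)%nat /\ (d <= bnat beta)%nat /\
      inL beta (w ++ v ++ [c]) /\ inL beta (w ++ v ++ [d]).

Definition is_g (beta : R) (w : list nat) (i : nat) : Prop :=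
  gap_ok beta w i /\ forall j, (j < i)%nat -> ~ gap_ok beta w j.

(* Main.v *)
Require Import Defs.
From Stdlib Require Import Reals List.
Open Scope R_scope.
From Stdlib Require Import Lra Lia ZArith Classical ClassicalEpsilon.
From HB Require Import structures.
From mathcomp Require all_boot all_order all_algebra.
From mathcomp Require all_classical all_reals all_analysis.
From mathcomp Require Rstruct Rstruct_topology.

Module MC.
Import all_boot all_order all_algebra.
Import all_classical all_reals all_analysis.
Import Rstruct Rstruct_topology.
Import Order.TTheory GRing.Theory Num.Theory.
Import numFieldNormedType.Exports.
Local Open Scope classical_set_scope.
Local Open Scope ring_scope.

Lemma ML (g : nat -> R) p q (a c : nat -> R) s :
  (p < q)%coqR -> (forall n, a n <= c n)%coqR -> infinite_sum (fun n => c n - a n)%coqR s ->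
  (forall z, p < z < q -> ~ (exists k, z = g k) -> exists n, a n < z < c n)%coqR ->
  (q - p <= s)%coqR.
Proof.
move=> pq ac hs hcov.
have cg : countable (range g) by exact: card_image_le.
have mg : @measurable _ (measurableTypeR R) (range g).
  by apply: countable_measurable => // t; exact: measurable_set1.
have lg : lebesgue_measure (range g) = 0%E by exact: countable_lebesgue_measure0.
pose F n : set (measurableTypeR R) := `]a n, c n[%classic `|` range g.
have sub : `]p, q[%classic `<=` \bigcup_n F n.
  move=> z /=; rewrite in_itv /= => /andP[/RltP pz /RltP zq].
  case: (Classical_Prop.classic (exists k, z = g k)) => [[k ->]|ne].
    by exists 0%N => //; right; exists k.
  have [n /= [an cn]] := hcov z (conj pz zq) ne.
  by exists n => //; left; rewrite /= in_itv /=; apply/andP; split; apply/RltP.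
have mF n : measurable (F n) by apply: measurableU => //.
have h1 := measure_sigma_subadditive (lebesgue_measure (R:=R)) mF
   (measurable_itv `]p, q[) sub.
have h2 : (\sum_(n <oo) lebesgue_measure (F n) <= \sum_(n <oo) ((c n - a n)%:E))%E.
  apply: lee_nneseries => [n _ _|n _]; first exact: measure_ge0.
  have hu := measureU2 (lebesgue_measure (R:=R)) (measurable_itv `]a n, c n[) mg.
  apply: (le_trans hu).
  rewrite [X in (_ + X)%E]lg adde0.
  have := lebesgue_measure_itv (R:=R) `]a n, c n[; rewrite /= => ->.
  by case: ifP => // _; rewrite lee_fin subr_ge0; apply/RleP; exact: ac.
have grow : forall n, (sum_f_R0 (fun n => c n - a n) n <= s)%coqR.
  move=> n; apply: (growing_ineq (sum_f_R0 (fun n => c n - a n))) => //.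
  move=> k /=; rewrite -[(c k.+1 - a k.+1)%R]RminusE; have := ac k.+1; lra.
have h3 : (\sum_(n <oo) ((c n - a n)%:E) <= s%:E)%E.
  apply: lime_le; first by apply: is_cvg_nneseries => n _ _; rewrite lee_fin subr_ge0; apply/RleP.
  apply: nearW => n; case: n => [|n].
    rewrite big_geq // lee_fin; apply/RleP.
    have H := grow 0%N; simpl in H; have := ac 0%N; rewrite -?R0E; lra.
  rewrite sumEFin lee_fin -sum_f_R0E; exact/RleP.
have := le_trans h1 (le_trans h2 h3).
have := lebesgue_measure_itv (R:=R) `]p, q[; rewrite /= => ->.
rewrite lte_fin.
have -> : (p < q)%R by apply/RltP.
rewrite lee_fin => /RleP; rewrite -RminusE; lra.
Qed.

Definition enum3 (h : bool -> nat -> list nat -> R) (n : nat) : R :=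
  match @unpickle (bool * nat * seq nat)%type n with
  | Some (f, j, l) => h f j l | None => 0%coqR end.
Lemma enum3_surj h f j l : exists n, enum3 h n = h f j l.
Proof. by exists (pickle (f, j, l)); rewrite /enum3 pickleK. Qed.

End MC.


Lemma INR_Z2N (z : Z) : (0 <= z)%Z -> INR (Z.to_nat z) = IZR z.
Proof. intro H. rewrite INR_IZR_INZ, Z2Nat.id; auto. Qed.

Lemma b_bounds beta : 1 < beta ->
  INR (bnat beta) < beta /\ beta <= INR (bnat beta) + 1 /\ (1 <= bnat beta)%nat.
Proof.
  intro Hb. unfold bnat, bZ. destruct (archimed beta) as [H1 H2].
  destruct (Rlt_dec (IZR (up beta - 1)) beta) as [Hl|Hl].
  - assert (Hu : (1 < up beta)%Z) by (apply lt_IZR; lra).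
    rewrite INR_Z2N by lia. rewrite minus_IZR in *. simpl in *.
    split; [lra|split; [lra|]].
    apply (INR_le 1). rewrite INR_Z2N by lia. rewrite minus_IZR. simpl.
    assert (Hu2 : (2 <= up beta)%Z) by lia. apply IZR_le in Hu2. simpl in Hu2. lra.
  - rewrite minus_IZR in Hl.
    assert (E : IZR (up beta) = beta + 1) by lra.
    assert (Hu : (2 < up beta)%Z) by (apply lt_IZR; lra).
    rewrite INR_Z2N by lia. rewrite minus_IZR. simpl.
    split; [lra|split; [lra|]].
    apply (INR_le 1). rewrite INR_Z2N by lia. rewrite minus_IZR. simpl.
    assert (Hu2 : (3 <= up beta)%Z) by lia. apply IZR_le in Hu2. simpl in Hu2. lra.
Qed.

Lemma Tgen_range beta y : 0 < Tgen beta y <= 1.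
Proof. unfold Tgen. destruct (base_Int_part (beta * y)). lra. Qed.

Lemma Int_part_eq r (k : Z) : IZR k <= r < IZR k + 1 -> Int_part r = k.
Proof.
  intros [H1 H2]. unfold Int_part.
  assert (E : (k + 1)%Z = up r).
  { apply tech_up; rewrite plus_IZR; simpl; lra. }
  lia.
Qed.

Lemma Int_part_nat beta y (j : nat) : 0 < beta ->
  INR j / beta <= y < (INR j + 1) / beta -> Int_part (beta * y) = Z.of_nat j.
Proof.
  intros Hb [H1 H2]. apply Int_part_eq. rewrite <- INR_IZR_INZ.
  split.
  - apply (Rmult_le_compat_l beta) in H1; [|lra]. field_simplify in H1; lra.
  - apply (Rmult_lt_compat_l beta) in H2; [|lra]. field_simplify in H2; lra.
Qed.

Lemma Tgen_nat beta y (j : nat) : 0 < beta ->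
  INR j / beta <= y < (INR j + 1) / beta -> Tgen beta y = - beta * y + INR j + 1.
Proof.
  intros Hb H. unfold Tgen. rewrite (Int_part_nat beta y j Hb H), <- INR_IZR_INZ. ring.
Qed.

Lemma idig_nat beta y (j : nat) : 0 < beta ->
  INR j / beta <= y < (INR j + 1) / beta -> Z.to_nat (Int_part (beta * y)) = j.
Proof. intros Hb H. rewrite (Int_part_nat beta y j Hb H). apply Nat2Z.id. Qed.

Lemma nonpart beta y (j : nat) : 0 < beta ->
  INR j / beta < y < (INR j + 1) / beta -> y < 1 -> ~ part_pt beta y.
Proof.
  intros Hb [H1 H2] H3 [E|[E|[i [_ E]]]].
  - subst. assert (0 <= INR j / beta) by (unfold Rdiv; apply Rmult_le_pos; [apply pos_INR|left; apply Rinv_0_lt_compat; lra]). lra.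
  - lra.
  - subst. apply (Rmult_lt_compat_l beta) in H1; [|lra]. apply (Rmult_lt_compat_l beta) in H2; [|lra].
    replace (beta * (INR j / beta)) with (INR j) in H1 by (field; lra).
    replace (beta * ((INR j + 1) / beta)) with (INR j + 1) in H2 by (field; lra).
    replace (beta * (INR i / beta)) with (INR i) in H1, H2 by (field; lra).
    rewrite <- S_INR in H2. apply INR_lt in H1. apply INR_lt in H2. lia.
Qed.

Lemma digit beta y : 1 < beta -> 0 < y < 1 -> ~ part_pt beta y ->
  let j := Z.to_nat (Int_part (beta * y)) in
  INR j / beta < y < (INR j + 1) / beta /\ (j <= bnat beta)%nat.
Proof.
  intros Hb Hy Hp j. destruct (base_Int_part (beta * y)) as [H1 H2].
  assert (HI : (0 <= Int_part (beta * y))%Z).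
  { assert (-1 < IZR (Int_part (beta * y))).
    { assert (0 < beta * y) by (apply Rmult_lt_0_compat; lra). lra. }
    apply lt_IZR in H. lia. }
  assert (Ej : INR j = IZR (Int_part (beta * y))) by (apply INR_Z2N; auto).
  destruct (b_bounds beta Hb) as [B1 [B2 B3]].
  assert (Hne : INR j <> beta * y).
  { intro E. apply Hp. destruct j as [|j'] eqn:Ej'.
    - left. simpl in E. assert (y = 0).
      { apply (Rmult_eq_reg_l beta); lra. } auto.
    - right; right. exists (S j'). split.
      + split; [lia|]. apply INR_le. assert (INR (S j') < INR (bnat beta) + 1).
        { assert (beta * y < beta * 1) by (apply Rmult_lt_compat_l; lra). lra. }
        rewrite <- S_INR in H. apply INR_lt in H. apply le_INR. lia.
      + rewrite E. field. lra. }
  split; [split|].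
  - apply (Rmult_lt_reg_l beta); [lra|]. field_simplify; lra.
  - apply (Rmult_lt_reg_l beta); [lra|]. field_simplify; lra.
  - assert (INR j < INR (bnat beta) + 1).
    { assert (beta * y < beta * 1) by (apply Rmult_lt_compat_l; lra). lra. }
    rewrite <- S_INR in H. apply INR_lt in H. lia.
Qed.
Lemma Tm_Tgen beta y : ~ part_pt beta y -> Tm beta y = Tgen beta y.
Proof.
  intro H. unfold Tm.
  destruct (Req_EM_T y 0) as [E|_]; [exfalso; apply H; left; auto|].
  destruct (Req_EM_T y 1) as [E|_]; [exfalso; apply H; right; left; auto|].
  destruct (excluded_middle_informative (part_pt beta y)) as [E|_]; [contradiction|auto].
Qed.

Lemma iter_range beta k x : 0 <= x <= 1 -> 0 <= Nat.iter k (Tgen beta) x <= 1.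
Proof.
  intro H. destruct k; simpl; auto. destruct (Tgen_range beta (Nat.iter k (Tgen beta) x)). lra.
Qed.

Lemma nonpre_Tm beta x : nonpre beta x -> forall k, Nat.iter k (Tm beta) x = Nat.iter k (Tgen beta) x.
Proof.
  intros [H0 H] k. induction k; simpl; auto. rewrite IHk. apply Tm_Tgen. apply H.
Qed.

Lemma nonpre_orbit beta x k : nonpre beta x ->
  0 < Nat.iter k (Tgen beta) x < 1 /\ ~ part_pt beta (Nat.iter k (Tgen beta) x).
Proof.
  intros [H0 H]. pose proof (iter_range beta k x H0). pose proof (H k).
  split; auto.
  assert (Nat.iter k (Tgen beta) x <> 0) by (intro E; apply H2; left; auto).
  assert (Nat.iter k (Tgen beta) x <> 1) by (intro E; apply H2; right; left; auto).
  lra.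
Qed.

Lemma nonpre_inJ beta x : 1 < beta -> nonpre beta x -> forall i, inJ beta (idig beta x i) (Nat.iter i (Tm beta) x).
Proof.
  intros Hb Hx i. rewrite nonpre_Tm by auto. unfold idig.
  destruct (nonpre_orbit beta x i Hx) as [Hy Hp].
  destruct (digit beta _ Hb Hy Hp) as [[H1 H2] Hj].
  set (y := Nat.iter i (Tgen beta) x) in *.
  set (j := Z.to_nat (Int_part (beta * y))) in *.
  destruct (b_bounds beta Hb) as [B1 [B2 B3]].
  unfold inJ.
  destruct (classic (Case1 beta)) as [C|C]; [left|right]; split; auto.
  - destruct (Nat.eq_dec j 0) as [E|E].
    + left. split; auto. rewrite E in H2. simpl in H2. lra.
    + destruct (Nat.eq_dec j (bnat beta)) as [E2|E2].
      * right; right. split; auto. rewrite <- E2. lra.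
      * right; left. split; [lia|split; [lia|lra]].
  - destruct (Nat.eq_dec j (bnat beta)) as [E2|E2].
    + right. split; auto. rewrite <- E2. lra.
    + left. split; [lia|lra].
Qed.

Lemma preim_of_nonpre beta w z : 1 < beta -> nonpre beta z ->
  (forall k, (k < length w)%nat -> idig beta z k = nth k w 0%nat) ->
  Phi_preim_cyl beta w z.
Proof.
  intros Hb Hz Hw. split; [apply Hz|]. exists (idig beta z). split.
  - intro i. apply nonpre_inJ; auto.
  - split; auto. intro n. exists z. split; auto.
Qed.

Lemma inL_point beta w : inL beta w -> exists x0, nonpre beta x0 /\
  forall k, (k < length w)%nat -> idig beta x0 k = nth k w 0%nat.
Proof.
  intros [y [Hy [m Hm]]]. destruct (Hy (m + length w)%nat) as [x [Hx Hxy]].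
  exists (Nat.iter m (Tgen beta) x). split.
  - split; [apply iter_range; apply Hx|]. intro n. rewrite <- Nat.iter_add. apply Hx.
  - intros k Hk. rewrite <- Hm by auto. rewrite Hxy by lia. unfold idig.
    rewrite <- Nat.iter_add. rewrite Nat.add_comm. reflexivity.
Qed.
Definition Fo beta y := y = 0 \/ exists k, y = Nat.iter k (Tm beta) 1.

Lemma Fo_step beta y (j : nat) : 1 < beta -> Fo beta y ->
  INR j / beta < y < (INR j + 1) / beta -> y < 1 -> Fo beta (- beta * y + INR j + 1).
Proof.
  intros Hb HF Hy H1.
  assert (Hp : ~ part_pt beta y) by (apply (nonpart beta y j); auto; lra).
  destruct HF as [E|[k E]].
  - exfalso; apply Hp; left; auto.
  - right. exists (S k). simpl. rewrite <- E. rewrite Tm_Tgen by auto.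
    symmetry; apply Tgen_nat; lra.
Qed.

Lemma Fo_Tm1 beta : Fo beta (- beta * 1 + (INR (bnat beta) + 1)).
Proof.
  right. exists 1%nat. simpl. unfold Tm.
  destruct (Req_EM_T 1 0); [lra|]. destruct (Req_EM_T 1 1); [auto|lra].
Qed.

Lemma main_interval beta x : 1 < beta -> nonpre beta x -> forall n : nat,
  exists p q u v (o : bool),
    0 <= p /\ p < x /\ x < q /\ q <= 1 /\ u < v /\ Fo beta u /\ Fo beta v /\
    0 <= u /\ v <= 1 /\ q - p = (v - u) / beta ^ n /\
    forall z, p < z < q ->
      (forall k, (k < n)%nat -> idig beta z k = idig beta x k /\
                 ~ part_pt beta (Nat.iter k (Tgen beta) z)) /\
      Nat.iter n (Tgen beta) z = (if o then u + beta ^ n * (z - p) else v - beta ^ n * (z - p)).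
Proof.
  intros Hb Hx n. induction n as [|n IH].
  - exists 0, 1, 0, 1, true.
    destruct (nonpre_orbit beta x 0 Hx) as [H0 _]. simpl in H0.
    split; [lra|split; [lra|split; [lra|split; [lra|split; [lra|]]]]].
    split; [left; auto|split; [right; exists 0%nat; auto|]].
    split; [lra|split; [lra|split; [simpl; field|]]].
    intros z Hz. split; [intros k Hk; lia|]. simpl. ring.
  - destruct IH as [p [q [u [v [o [Hp0 [Hpx [Hxq [Hq1 [Huv [Fu [Fv [Hu0 [Hv1 [Hlen Hz]]]]]]]]]]]]]]].
    set (B := beta ^ n).
    assert (HB : 0 < B) by (apply pow_lt; lra).
    fold B in Hlen, Hz.
    destruct (nonpre_orbit beta x n Hx) as [Hgx Hgp].
    destruct (digit beta _ Hb Hgx Hgp) as [[J1 J2] Hj].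
    set (gx := Nat.iter n (Tgen beta) x) in *.
    assert (Hjn : idig beta x n = Z.to_nat (Int_part (beta * gx))) by reflexivity.
    set (j := Z.to_nat (Int_part (beta * gx))) in *.
    destruct (b_bounds beta Hb) as [B1 [B2 B3]].
    assert (Hxin : p < x < q) by lra.
    destruct (Hz x Hxin) as [_ Hgxf]. fold gx in Hgxf.
    assert (Hgxuv : u < gx < v).
    { assert (0 < B * (x - p)) by (apply Rmult_lt_0_compat; lra).
      assert (B * (x - p) < v - u).
      { assert (B * (x - p) < B * ((v - u)/B)) by (apply Rmult_lt_compat_l; lra).
        replace (B * ((v-u)/B)) with (v - u) in H0 by (field; lra). lra. }
      destruct o; lra. }
    set (u' := Rmax u (INR j / beta)). set (v' := Rmin v ((INR j + 1) / beta)).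
    assert (Hu'1 : u <= u') by apply Rmax_l. assert (Hu'2 : INR j / beta <= u') by apply Rmax_r.
    assert (Hv'1 : v' <= v) by apply Rmin_l. assert (Hv'2 : v' <= (INR j + 1)/beta) by apply Rmin_r.
    assert (Hu'x : u' < gx) by (apply Rmax_lub_lt; lra).
    assert (Hv'x : gx < v') by (apply Rmin_glb_lt; lra).
    set (u'' := - beta * v' + INR j + 1). set (v'' := - beta * u' + INR j + 1).
    assert (Fu'' : Fo beta u'').
    { unfold u'', v'. destruct (Rle_dec v ((INR j + 1)/beta)) as [Hle|Hle].
      - rewrite Rmin_left by auto.
        destruct (Req_dec v ((INR j + 1)/beta)) as [E|E].
        + left. rewrite E. field. lra.
        + destruct (Req_dec v 1) as [E1|E1].
          * assert (j = bnat beta).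
            { assert (INR (bnat beta) < INR j + 1).
              { assert (1 < (INR j + 1)/beta) by lra.
                apply (Rmult_lt_compat_l beta) in H; [|lra].
                replace (beta * ((INR j + 1)/beta)) with (INR j + 1) in H by (field; lra). lra. }
              rewrite <- S_INR in H. apply INR_lt in H. lia. }
            rewrite E1, H. replace (- beta * 1 + INR (bnat beta) + 1) with (- beta * 1 + (INR (bnat beta) + 1)) by ring.
            apply Fo_Tm1.
          * apply Fo_step; auto; lra.
      - rewrite Rmin_right by lra. left. field. lra. }
    assert (Fv'' : Fo beta v'').
    { unfold v'', u'. destruct (Rle_dec u (INR j / beta)) as [Hle|Hle].
      - rewrite Rmax_right by auto. right. exists 0%nat. simpl. field. lra.
      - rewrite Rmax_left by lra. apply Fo_step; auto; lra. }
    assert (Hsub : forall z, u' < z < v' -> INR j / beta < z < (INR j + 1) / beta /\ z < 1) by (intros; lra).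
    assert (Hbv : beta * v' <= INR j + 1).
    { apply (Rmult_le_compat_l beta) in Hv'2; [|lra].
      replace (beta * ((INR j + 1)/beta)) with (INR j + 1) in Hv'2 by (field; lra). lra. }
    assert (Hbu : INR j <= beta * u').
    { apply (Rmult_le_compat_l beta) in Hu'2; [|lra].
      replace (beta * (INR j/beta)) with (INR j) in Hu'2 by (field; lra). lra. }
    assert (Hstep : forall z, p < z < q -> u' < Nat.iter n (Tgen beta) z < v' ->
      (forall k, (k < S n)%nat -> idig beta z k = idig beta x k /\
                 ~ part_pt beta (Nat.iter k (Tgen beta) z)) /\
      Nat.iter (S n) (Tgen beta) z = - beta * Nat.iter n (Tgen beta) z + INR j + 1).
    { intros z Hzpq Hg. destruct (Hz z Hzpq) as [Hk _].
      destruct (Hsub _ Hg) as [Hg1 Hg2].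
      split.
      - intros k Hk'. destruct (Nat.eq_dec k n) as [E|E].
        + subst k. split.
          * rewrite Hjn. unfold idig. apply idig_nat; lra.
          * apply (nonpart beta _ j); lra.
        + apply Hk. lia.
      - simpl. apply Tgen_nat; lra. }
    destruct o.
    + exists (p + (u' - u)/B), (p + (v' - u)/B), u'', v'', false.
      assert (Hx1 : x - p = (gx - u)/B) by (rewrite Hgxf; field; lra).
      assert (HuB : 0 <= (u' - u)/B) by (apply Rmult_le_pos; [lra|left; apply Rinv_0_lt_compat; lra]).
      assert (Hq' : (v' - u)/B <= (v-u)/B) by (apply Rmult_le_compat_r; [left; apply Rinv_0_lt_compat; lra|lra]).
      assert (Hlt1 : (u' - u)/B < (gx - u)/B) by (apply Rmult_lt_compat_r; [apply Rinv_0_lt_compat; lra|lra]).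
      assert (Hlt2 : (gx - u)/B < (v' - u)/B) by (apply Rmult_lt_compat_r; [apply Rinv_0_lt_compat; lra|lra]).
      split; [lra|split; [lra|split; [lra|split; [lra|]]]].
      split; [unfold u'', v''; nra|split; [auto|split; [auto|]]].
      split; [unfold u''; lra|split; [unfold v''; lra|]].
      split.
      { unfold u'', v''. simpl. fold B. field. split; lra. }
      intros z Hzr. assert (Hzpq : p < z < q) by lra.
      destruct (Hz z Hzpq) as [_ Hgz].
      assert (Hg : u' < Nat.iter n (Tgen beta) z < v').
      { rewrite Hgz.
        assert (u' - u < B * (z - p) < v' - u).
        { split.
          - apply (Rmult_lt_reg_r (/B)); [apply Rinv_0_lt_compat; lra|].
            replace (B * (z - p) * / B) with (z - p) by (field; lra). unfold Rdiv in *. lra.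
          - apply (Rmult_lt_reg_r (/B)); [apply Rinv_0_lt_compat; lra|].
            replace (B * (z - p) * / B) with (z - p) by (field; lra). unfold Rdiv in *. lra. }
        lra. }
      destruct (Hstep z Hzpq Hg) as [Hs1 Hs2]. split; auto.
      rewrite Hs2, Hgz. unfold v''. simpl. fold B. field. lra.
    + exists (p + (v - v')/B), (p + (v - u')/B), u'', v'', true.
      assert (Hx1 : x - p = (v - gx)/B) by (rewrite Hgxf; field; lra).
      assert (HuB : 0 <= (v - v')/B) by (apply Rmult_le_pos; [lra|left; apply Rinv_0_lt_compat; lra]).
      assert (Hq' : (v - u')/B <= (v-u)/B) by (apply Rmult_le_compat_r; [left; apply Rinv_0_lt_compat; lra|lra]).
      assert (Hlt1 : (v - v')/B < (v - gx)/B) by (apply Rmult_lt_compat_r; [apply Rinv_0_lt_compat; lra|lra]).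
      assert (Hlt2 : (v - gx)/B < (v - u')/B) by (apply Rmult_lt_compat_r; [apply Rinv_0_lt_compat; lra|lra]).
      split; [lra|split; [lra|split; [lra|split; [lra|]]]].
      split; [unfold u'', v''; nra|split; [auto|split; [auto|]]].
      split; [unfold u''; lra|split; [unfold v''; lra|]].
      split.
      { unfold u'', v''. simpl. fold B. field. split; lra. }
      intros z Hzr. assert (Hzpq : p < z < q) by lra.
      destruct (Hz z Hzpq) as [_ Hgz].
      assert (Hg : u' < Nat.iter n (Tgen beta) z < v').
      { rewrite Hgz.
        assert (v - v' < B * (z - p) < v - u').
        { split.
          - apply (Rmult_lt_reg_r (/B)); [apply Rinv_0_lt_compat; lra|].
            replace (B * (z - p) * / B) with (z - p) by (field; lra). unfold Rdiv in *. lra.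
          - apply (Rmult_lt_reg_r (/B)); [apply Rinv_0_lt_compat; lra|].
            replace (B * (z - p) * / B) with (z - p) by (field; lra). unfold Rdiv in *. lra. }
        lra. }
      destruct (Hstep z Hzpq Hg) as [Hs1 Hs2]. split; auto.
      rewrite Hs2, Hgz. unfold u''. simpl. fold B. field. lra.
Qed.
Lemma pt_sep (h : R) (l : list R) : exists d, 0 < d /\ forall b, In b l -> b <> h -> d <= Rabs (b - h).
Proof.
  induction l as [|a l [d [Hd H]]].
  - exists 1. split; [lra|]. intros b [].
  - destruct (Req_dec a h) as [E|E].
    + exists d. split; auto. intros b [Eb|Hb] Hn; [subst; contradiction|auto].
    + exists (Rmin d (Rabs (a - h))). split.
      * apply Rmin_glb_lt; auto. apply Rabs_pos_lt. lra.
      * intros b [Eb|Hb] Hn.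
        -- subst. apply Rmin_r.
        -- apply Rle_trans with d; [apply Rmin_l|auto].
Qed.

Lemma list_sep (l : list R) : exists d, 0 < d /\ forall a b, In a l -> In b l -> a < b -> d <= b - a.
Proof.
  induction l as [|h l [d1 [Hd1 H1]]].
  - exists 1. split; [lra|]. intros a b [].
  - destruct (pt_sep h l) as [d2 [Hd2 H2]].
    exists (Rmin d1 d2). split; [apply Rmin_glb_lt; auto|].
    intros a b Ha Hb Hab.
    destruct Ha as [Ea|Ha]; destruct Hb as [Eb|Hb].
    + subst; lra.
    + subst a. apply Rle_trans with d2; [apply Rmin_r|]. 
      assert (Hne : b <> h) by lra. specialize (H2 b Hb Hne). rewrite Rabs_right in H2; lra.
    + subst b. apply Rle_trans with d2; [apply Rmin_r|].
      assert (Hne : a <> h) by lra. specialize (H2 a Ha Hne). rewrite Rabs_left in H2; lra.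
    + apply Rle_trans with d1; [apply Rmin_l|auto].
Qed.

Lemma yrrap_fin beta : Yrrap beta -> exists L : list R, forall y, Fo beta y -> In y L.
Proof.
  intros [M [P [HP HMP]]].
  assert (Hk : forall k, exists k', (k' < M + P)%nat /\ Nat.iter k (Tm beta) 1 = Nat.iter k' (Tm beta) 1).
  { intro k. induction k as [k IH] using (well_founded_induction lt_wf).
    destruct (Nat.lt_ge_cases k (M + P)) as [Hl|Hl].
    - exists k; auto.
    - destruct (IH (k - P)%nat ltac:(lia)) as [k' [Hk' E]]. exists k'. split; auto.
      rewrite <- E.
      replace k with ((k - M - P) + (M + P))%nat by lia.
      rewrite Nat.iter_add, HMP, <- Nat.iter_add. f_equal. lia. }
  exists (0 :: map (fun k => Nat.iter k (Tm beta) 1) (seq 0 (M + P))).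
  intros y [E|[k E]].
  - left; auto.
  - right. destruct (Hk k) as [k' [Hk' E']]. apply in_map_iff. exists k'. split.
    + congruence.
    + apply in_seq. lia.
Qed.

Lemma Fo_sep beta : Yrrap beta -> exists d, 0 < d /\ forall u v, Fo beta u -> Fo beta v -> u < v -> d <= v - u.
Proof.
  intro Hy. destruct (yrrap_fin beta Hy) as [L HL]. destruct (list_sep L) as [d [Hd H]].
  exists d. split; auto.
Qed.

Fixpoint back (beta c : R) (l : list nat) : R :=
  match l with
  | nil => c
  | i :: l' => (INR i + 1 - back beta c l') / beta
  end.

Definition hpt (beta : R) (f : bool) (j : nat) (l : list nat) : R :=
  back beta (if f then 1 else INR j / beta) l.

Lemma back_iter beta : 1 < beta -> forall k z c, 0 <= z -> Nat.iter k (Tgen beta) z = c ->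
  exists l, z = back beta c l.
Proof.
  intros Hb k. induction k as [|k IH]; intros z c Hz E.
  - exists nil. simpl in *. auto.
  - rewrite Nat.iter_succ_r in E.
    destruct (Tgen_range beta z) as [T1 T2].
    destruct (IH (Tgen beta z) c ltac:(lra) E) as [l El].
    destruct (base_Int_part (beta * z)) as [H1 H2].
    assert (HI : (0 <= Int_part (beta * z))%Z).
    { assert (-1 < IZR (Int_part (beta * z))).
      { assert (0 <= beta * z) by (apply Rmult_le_pos; lra). lra. }
      apply lt_IZR in H. lia. }
    exists (Z.to_nat (Int_part (beta * z)) :: l). simpl. rewrite <- El, INR_Z2N by auto.
    unfold Tgen. field. lra.
Qed.

Lemma bad_enum beta z k : 1 < beta -> 0 <= z -> part_pt beta (Nat.iter k (Tgen beta) z) ->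
  exists f j l, z = hpt beta f j l.
Proof.
  intros Hb Hz [E|[E|[i [_ E]]]].
  - destruct (back_iter beta Hb k z _ Hz E) as [l El]. exists false, 0%nat, l.
    unfold hpt. simpl. replace (0 / beta) with 0 by (field; lra). auto.
  - destruct (back_iter beta Hb k z _ Hz E) as [l El]. exists true, 0%nat, l. auto.
  - destruct (back_iter beta Hb k z _ Hz E) as [l El]. exists false, i, l. auto.
Qed.

Theorem lemma6p4 (beta : R) (Hbeta : 1 < beta) (Hy : Yrrap beta)
  (Hg : forall eps, 0 < eps -> exists N : nat, forall n : nat, (N <= n)%nat ->
          forall w : list nat, length w = n -> inL beta w ->
          exists i : nat, is_g beta w i /\ INR i <= eps * INR n) :
  forall eps, 0 < eps -> exists N : nat, forall n : nat, (N <= n)%nat ->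
    forall w : list nat, length w = n -> inL beta w ->
    forall m : R, lebesgue_measure_is (Phi_preim_cyl beta w) m ->
      0 < m /\ ln m / INR n + ln beta >= - eps.
Proof.
  intros eps Heps.
  destruct (Fo_sep beta Hy) as [d [Hd Hsep]].
  set (r := Rabs (ln d) / eps).
  assert (Hr : 0 <= r) by (unfold r, Rdiv; apply Rmult_le_pos; [apply Rabs_pos|left; apply Rinv_0_lt_compat; lra]).
  destruct (archimed r) as [Ar1 Ar2].
  assert (Hup : (0 <= up r)%Z) by (apply le_IZR; lra).
  exists (S (Z.to_nat (up r))). intros n Hn w Hw HL m [Hm1 Hm2].
  destruct (inL_point beta w HL) as [x0 [Hx0 Hpref]].
  destruct (main_interval beta x0 Hbeta Hx0 n) as [p [q [u [v [o [Hp0 [Hpx [Hxq [Hq1 [Huv [Fu [Fv [Hu0 [Hv1 [Hlen Hz]]]]]]]]]]]]]]].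
  assert (Hqp : q - p <= m).
  { destruct (Rle_or_lt (q - p) m) as [H|H]; auto. exfalso.
    destruct (Hm2 (q - p - m) ltac:(lra)) as [s [[a [c [Hac [Hcov Hsum]]]] Hs]].
    assert (q - p <= s).
    { apply (MC.ML (MC.enum3 (hpt beta)) p q a c s); auto; [lra|].
      intros z Hzr Hne. apply Hcov. apply preim_of_nonpre; auto.
      - split; [lra|]. intros k Hk. apply Hne.
        destruct (bad_enum beta z k Hbeta ltac:(lra) Hk) as [f [j [l E]]].
        destruct (MC.enum3_surj (hpt beta) f j l) as [nn En]. exists nn. rewrite En; auto.
      - intros k Hk. rewrite <- Hpref by auto. destruct (Hz z Hzr) as [H1 _]. apply H1. lia. }
    lra. }
  set (B := beta ^ n) in *.
  assert (HB : 0 < B) by (apply pow_lt; lra).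
  assert (Hdv : d <= v - u) by auto.
  assert (HdB : d / B <= m).
  { apply Rle_trans with (q - p); auto. rewrite Hlen.
    apply Rmult_le_compat_r; [left; apply Rinv_0_lt_compat; lra|lra]. }
  assert (HdB0 : 0 < d / B) by (apply Rdiv_lt_0_compat; lra).
  split; [lra|].
  assert (Hln : ln (d / B) <= ln m).
  { destruct (Req_dec (d / B) m) as [E|E]; [rewrite E; lra|].
    left. apply ln_increasing; lra. }
  assert (HlnB : ln (d / B) = ln d - INR n * ln beta).
  { unfold Rdiv. rewrite ln_mult, ln_Rinv; auto; [|apply Rinv_0_lt_compat; lra].
    unfold B. rewrite ln_pow by lra. ring. }
  assert (HN : r < INR n).
  { apply Rlt_le_trans with (IZR (up r)); [lra|].
    rewrite <- INR_Z2N by auto. apply le_INR. lia. }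
  assert (HN0 : 0 < INR n) by lra.
  assert (Hd2 : - ln d <= eps * INR n).
  { assert (Rabs (ln d) < eps * INR n).
    { unfold r in HN. apply (Rmult_lt_compat_l eps) in HN; [|lra].
      replace (eps * (Rabs (ln d) / eps)) with (Rabs (ln d)) in HN by (field; lra). lra. }
    pose proof (Rle_abs (- ln d)). rewrite Rabs_Ropp in H0. lra. }
  assert (H : - eps * INR n <= ln m + INR n * ln beta) by lra.
  apply Rmult_le_compat_r with (r := / INR n) in H; [|left; apply Rinv_0_lt_compat; lra].
  replace (- eps * INR n * / INR n) with (- eps) in H by (field; lra).
  replace ((ln m + INR n * ln beta) * / INR n) with (ln m / INR n + ln beta) in H by (field; lra).
  lra.
Qed.
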